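(* Let $A, B, C, F \in \mathbb{R}^{n\times n}$ and consider the matrix equation $$AX + B\lvert CX\rvert = F$$ in the unknown $X \in \mathbb{R}^{n\times n}$. This equation has exactly one solution if any one of the following conditions is satisfied: (i) $C$ is invertible and $\sigma_{\max}(\lvert B\rvert) < \sigma_{\min}(AC^{-1})$; (ii) $C$ is invertible and $\sigma_{\max}(B) < \sigma_{\min}(AC^{-1})$; (iii) $A$ is invertible and $\rho\left(\lvert CA^{-1}\rvert\cdot\lvert B\rvert\right) < 1$; (iv) $A$ is invertible and $\sigma_{\max}(CA^{-1}B) < 1$.
   Context: $\lvert M\rvert$ is the entrywise absolute value of a matrix $M$; $\sigma_{\max}(\cdot)$ and $\sigma_{\min}(\cdot)$ denote the largest and smallest singular values of a real square matrix; $\rho(\cdot)$ is the spectral radius. *)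

(* Defs.v *)
From mathcomp Require Import all_boot all_order all_algebra.
From mathcomp Require Import reals.
From mathcomp.real_closed Require Export complex.
Set Implicit Arguments. Unset Strict Implicit. Unset Printing Implicit Defensive.
Import Order.TTheory GRing.Theory Num.Theory.
Local Open Scope ring_scope.

Section Defs.
Variable R : realType.

Definition absmx (m n : nat) (M : 'M[R]_(m, n)) : 'M[R]_(m, n) :=
  map_mx (fun x => `|x|) M.

Definition cplx_mx (n : nat) (M : 'M[R]_n) : 'M[R[i]]_n :=
  map_mx (fun x : R => Complex x 0) M.

(* the complex eigenvalues of M, listed with algebraic multiplicity:
   the roots of its characteristic polynomial over C *)
Definition eigs (n : nat) (M : 'M[R]_n) : seq R[i] :=
  sval (closed_field_poly_normal (char_poly (cplx_mx M))).

Definition spectral_radius (n : nat) (M : 'M[R]_n) : R :=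
  \big[Num.max/0]_(z <- eigs M) Num.sqrt (complex.Re z ^+ 2 + complex.Im z ^+ 2).

(* singular values of M = square roots of the eigenvalues of M^T M
   (which are real and nonnegative) *)
Definition gram_eigs (n : nat) (M : 'M[R]_n) : seq R :=
  [seq complex.Re z | z <- eigs (M^T *m M)].

Definition sigma_max (n : nat) (M : 'M[R]_n) : R :=
  Num.sqrt (\big[Num.max/0]_(x <- gram_eigs M) x).

Definition sigma_min (n : nat) (M : 'M[R]_n) : R :=
  Num.sqrt (\big[Num.min/head 0 (gram_eigs M)]_(x <- gram_eigs M) x).

End Defs.

(* Main.v *)
Require Import Defs.
From HB Require Import structures.
From mathcomp Require Import all_boot all_order all_algebra.
From mathcomp Require Import reals.
From mathcomp.real_closed Require Import complex.
From mathcomp Require Import lra ring.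
From mathcomp Require Import spectral sesquilinear.
From mathcomp Require Import interval_inference classical_sets functions topology normedtype sequences.
Import Order.TTheory GRing.Theory Num.Theory.
Local Open Scope ring_scope.
Local Open Scope complex_scope.
Set Implicit Arguments. Unset Strict Implicit. Unset Printing Implicit Defensive.

Definition mxR (R : realType) m p := 'M[R]_(m,p).
HB.instance Definition _ (R : realType) m p := NormedModule.on (mxR R m p).
HB.instance Definition _ (R : realType) m p := Complete.on (mxR R m p).

Section Entry.
Variable R : realType.

Definition mxle m p (M N : 'M[R]_(m,p)) := forall i j, M i j <= N i j.

Lemma mx_norm_entry m p (M : 'M[R]_(m,p)) i j : `|M i j| <= mx_norm M.
Proof. rewrite mx_normrE; exact: (le_bigmax _ (fun ij => `|M ij.1 ij.2|) (i, j)). Qed.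

Lemma mx_norm_le m p (M : 'M[R]_(m,p)) c : 0 <= c -> (forall i j, `|M i j| <= c) -> mx_norm M <= c.
Proof. by move=> c0 H; rewrite mx_normrE; apply: bigmax_le => // -[i j] _; apply: H. Qed.

Lemma mx_norm_ge0 m p (M : 'M[R]_(m,p)) : 0 <= mx_norm M.
Proof. by rewrite mx_normrE; apply: bigmax_ge_id. Qed.

Lemma absmx_mul m p r (A : 'M[R]_(m,p)) (B : 'M[R]_(p,r)) :
  mxle (absmx (A *m B)) (absmx A *m absmx B).
Proof.
move=> i j; rewrite !mxE; apply: le_trans (ler_norm_sum _ _ _) _.
by apply: ler_sum => k _; rewrite !mxE normrM.
Qed.

Lemma mxle_mul m p r (L : 'M[R]_(m,p)) (M N : 'M[R]_(p,r)) :
  (forall i j, 0 <= L i j) -> mxle M N -> mxle (L *m M) (L *m N).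
Proof.
move=> L0 H i j; rewrite !mxE; apply: ler_sum => k _.
by apply: ler_wpM2l.
Qed.

Lemma mxle_mulr m p r (L M : 'M[R]_(m,p)) (N : 'M[R]_(p,r)) :
  (forall i j, 0 <= N i j) -> mxle L M -> mxle (L *m N) (M *m N).
Proof.
move=> N0 H i j; rewrite !mxE; apply: ler_sum => k _.
by apply: ler_wpM2r.
Qed.

Lemma mxle_trans m p (L M N : 'M[R]_(m,p)) : mxle L M -> mxle M N -> mxle L N.
Proof. by move=> H1 H2 i j; apply: le_trans (H1 i j) (H2 i j). Qed.

Lemma absmx_sub m p (X Y : 'M[R]_(m,p)) :
  mxle (absmx (absmx X - absmx Y)) (absmx (X - Y)).
Proof. by move=> i j; rewrite !mxE ler_dist_dist. Qed.

Lemma absmx_ge0 m p (X : 'M[R]_(m,p)) i j : 0 <= absmx X i j.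
Proof. by rewrite mxE. Qed.

Lemma geo_small (a eps : R) : 0 <= a -> a < 1 -> 0 < eps -> exists k, a ^+ k <= eps.
Proof.
move=> a0 a1 e0.
have a1' : `|a| < 1 by rewrite ger0_norm.
have := cvg_expr a1'.
move=> /(@cvgrPdist_lt R R^o nat _ _ (fun k => a ^+ k) 0) /(_ eps e0) [N _ HN].
exists N; have := HN N (leqnn N).
by rewrite sub0r normrN ger0_norm ?exprn_ge0 // => /ltW.
Qed.

End Entry.
Section Fix.
Variable R : realType.
Variables m p : nat.

Lemma fixpoint_iter (G : 'M[R]_(m,p) -> 'M[R]_(m,p)) (k : nat) (q : R) :
  0 <= q -> q < 1 ->
  (forall x y, mx_norm (iter k G x - iter k G y) <= q * mx_norm (x - y)) ->
  exists! x, G x = x.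
Proof.
move=> q0 q1 H.
pose H' := @mkfun_fun (mxR R m p) (mxR R m p) setT setT (iter k G) (fun _ _ => I).
have ctr : is_contraction H'.
  exists (NngNum q0); split => //= -[x y] _; exact: H.
have [pp _ Hp] := @banach_fixed_point R (mxR R m p) setT H' ctr closedT (ex_intro _ 0 I).
have Hp' : iter k G pp = pp by rewrite {2}Hp.
have uniq y : iter k G y = y -> y = pp.
  move=> Hy; apply/eqP; rewrite -subr_eq0; apply/eqP/mx_norm_eq0.
  apply/le_anti; rewrite -[mx_norm _]/(`|(y - pp : mxR R m p)|) normr_ge0 andbT.
  have := H y pp; rewrite Hy Hp' => h.
  have : `|(y - pp : mxR R m p)| * (1 - q) <= 0 by rewrite mulrBr mulr1 subr_le0 mulrC.
  by rewrite pmulr_lle0 // subr_gt0.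
exists pp; split.
  apply: uniq; by rewrite -iterSr iterS Hp'.
move=> y Gy; apply/esym/uniq.
elim: k {H H' ctr Hp Hp' uniq} => [|k IH] //=; by rewrite IH.
Qed.
End Fix.
Section Core.
Variable R : realType.
Variable n : nat.
Implicit Types (Q P Cst W : 'M[R]_n).

Definition Gmap Q Cst W := Cst - Q *m absmx W.

Lemma Gmap_diff Q Cst U1 U2 :
  Gmap Q Cst U1 - Gmap Q Cst U2 = Q *m (absmx U2 - absmx U1).
Proof. by rewrite /Gmap mulmxBr opprB addrC addrA subrK addrC. Qed.

Lemma core_abs Q P Cst (k : nat) :
  mxle (absmx Q) P ->
  (forall i j, (iter k (mulmx P) 1%:M) i j <= (2 * n%:R + 2)^-1) ->
  exists! W, Gmap Q Cst W = W.
Proof.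
move=> QP Pk.
have P0 : forall i j, 0 <= P i j.
  by move=> i j; apply: le_trans (QP i j); rewrite mxE.
have claim : forall k' W1 W2, mxle (absmx (iter k' (Gmap Q Cst) W1 - iter k' (Gmap Q Cst) W2))
                                (iter k' (mulmx P) 1%:M *m absmx (W1 - W2)).
  elim=> [|k' IH] W1 W2; first by rewrite /= mul1mx => i j.
  rewrite !iterS Gmap_diff.
  apply: mxle_trans (absmx_mul _ _) _.
  apply: mxle_trans (mxle_mulr (@absmx_ge0 _ _ _ _) QP) _.
  apply: mxle_trans (mxle_mul P0 (absmx_sub _ _)) _.
  rewrite -mulmxA; apply: mxle_mul => // i j.
  have := IH W1 W2 i j; by rewrite !mxE distrC.
apply: (@fixpoint_iter R n n _ k (2^-1)) => //.
- by rewrite invf_lt1 // ltr1n.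
move=> W1 W2; apply: mx_norm_le.
  by rewrite mulr_ge0 ?invr_ge0 ?mx_norm_ge0.
move=> i j; have := claim k W1 W2 i j; rewrite mxE => /le_trans; apply.
rewrite mxE.
apply: le_trans (_ : \sum_(l < n) (2 * n%:R + 2)^-1 * mx_norm (W1 - W2) <= _).
  apply: ler_sum => l _; apply: le_trans (ler_wpM2r (absmx_ge0 _ _ _) (Pk i l)) _.
  by apply: ler_wpM2l; rewrite ?invr_ge0 ?addr_ge0 ?mulr_ge0 // mxE mx_norm_entry.
rewrite sumr_const card_ord -mulrnAl ler_wpM2r ?mx_norm_ge0 //.
rewrite -mulr_natr ler_pdivrMl ?ltr_wpDl ?mulr_ge0 //.
rewrite mulrDl [2 * _]mulrC -mulrA divff ?pnatr_eq0 // mulr1.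
by rewrite lerDl.
Qed.

End Core.
Section Core2.
Variable R : realType.
Variable n : nat.
Implicit Types (Q P Cst W M : 'M[R]_n).

Definition csq (M : 'M[R]_n) j := \sum_i (M i j)^+2.

Lemma csq_ge0 M j : 0 <= csq M j.
Proof. by apply: sumr_ge0 => i _; apply: sqr_ge0. Qed.

Lemma entry_csq M i j : (M i j)^+2 <= csq M j.
Proof.
rewrite /csq (bigD1 i) //= lerDl; apply: sumr_ge0 => l _; apply: sqr_ge0.
Qed.

Lemma csq_norm M j : csq M j <= n%:R * (mx_norm M)^+2.
Proof.
apply: le_trans (_ : \sum_(i < n) (mx_norm M)^+2 <= _).
  apply: ler_sum => i _; rewrite -[M i j ^+ 2]real_normK ?num_real //.
  apply: lerXn2r; rewrite ?nnegrE ?normr_ge0 ?mx_norm_ge0 //.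
  exact: mx_norm_entry.
by rewrite sumr_const card_ord mulr_natl.
Qed.

Lemma core_euc Q Cst (a : R) : 0 <= a -> a < 1 ->
  (forall v : 'cV[R]_n, \sum_i ((Q *m v) i 0)^+2 <= a * \sum_i (v i 0)^+2) ->
  exists! W, Gmap Q Cst W = W.
Proof.
move=> a0 a1 HQ.
have claim : forall k W1 W2 j, csq (iter k (Gmap Q Cst) W1 - iter k (Gmap Q Cst) W2) j
                                 <= a^+k * csq (W1 - W2) j.
  elim=> [|k IH] W1 W2 j; first by rewrite /= expr0 mul1r.
  rewrite !iterS Gmap_diff.
  set D := absmx _ - absmx _.
  have e1 : csq (Q *m D) j = \sum_i ((Q *m col j D) i 0)^+2.
    by apply: eq_bigr => i _; rewrite !mxE; congr (_ ^+ 2); apply: eq_bigr => l _; rewrite !mxE.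
  rewrite e1; apply: le_trans (HQ _) _.
  rewrite exprS -mulrA; apply: ler_wpM2l => //.
  apply: le_trans (IH W1 W2 j).
  apply: ler_sum => i _; rewrite !mxE.
  rewrite -[X in _ <= X]real_normK ?num_real // -[X in X <= _]real_normK ?num_real //.
  apply: lerXn2r; rewrite ?nnegrE ?normr_ge0 //.
  by rewrite distrC ler_dist_dist.
have [k Hk] := @geo_small R a (4 * n%:R + 4)^-1 a0 a1
   (ltac:(by rewrite invr_gt0 ltr_wpDl ?mulr_ge0)).
apply: (@fixpoint_iter R n n _ k (2^-1)) => //.
- by rewrite invf_lt1 // ltr1n.
move=> W1 W2; apply: mx_norm_le.
  by rewrite mulr_ge0 ?invr_ge0 ?mx_norm_ge0.
move=> i j.
set E := _ - _.
set N := mx_norm (W1 - W2).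
have N0 : 0 <= N by apply: mx_norm_ge0.
rewrite -(@ler_pXn2r _ 2) // ?nnegrE ?normr_ge0 ?mulr_ge0 ?invr_ge0 //.
rewrite real_normK ?num_real //.
apply: le_trans (entry_csq _ _ _) _.
apply: le_trans (claim k W1 W2 j) _.
apply: le_trans (ler_wpM2l (exprn_ge0 _ a0) (csq_norm _ _)) _.
apply: le_trans (ler_wpM2r (mulr_ge0 (ler0n _ _) (sqr_ge0 N)) Hk) _.
rewrite exprMn mulrA ler_wpM2r ?sqr_ge0 //.
rewrite ler_pdivrMl ?ltr_wpDl ?mulr_ge0 //.
have : (0:R) <= n%:R by [].
lra.
Qed.

End Core2.
Set Implicit Arguments. Unset Strict Implicit. Unset Printing Implicit Defensive.

Section Herm.
Variable C : numClosedFieldType.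
Variable n : nat.
Local Open Scope sesquilinear_scope.

Lemma herm_decomp (A : 'M[C]_n) : A \is hermsymmx ->
  exists P : 'M[C]_n, exists dd : 'rV[C]_n,
    [/\ P *m P^t* = 1%:M, P^t* *m P = 1%:M, A = P^t* *m diag_mx dd *m P,
        (forall i, dd 0 i \is Num.real) & (forall i, root (char_poly A) (dd 0 i))].
Proof.
move=> Ah.
have An := hermitian_normalmx Ah.
have Ad := orthomx_spectralP An.
have Pu := spectral_unitarymx A.
have Pinv := invmx_unitary Pu.
have PU := unitarymx_unit Pu.
set P := spectralmx A in Ad Pu Pinv PU *.
exists P, (spectral_diag A).
have PPt : P *m P^t* = 1%:M by apply/unitarymxP.
have PtP : P^t* *m P = 1%:M by rewrite -Pinv mulVmx.
split => //.
- by rewrite -Pinv.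
- by move=> i; have /mxOverP := hermitian_spectral_diag_real Ah; apply.
move=> i; rewrite -eigenvalue_root_char; apply/eigenvalueP.
exists (row i P).
  rewrite -row_mul {1}Ad !mulmxA mulmxV // mul1mx.
  rewrite row_mul.
  have -> : row i (diag_mx (spectral_diag A)) = spectral_diag A 0 i *: row i 1%:M.
    by apply/rowP => j; rewrite !mxE mulr_natr.
  by rewrite -scalemxAl row1 -rowE.
apply/negP => /eqP r0.
have : row i (P *m invmx P) = 0 by rewrite row_mul r0 mul0mx.
rewrite mulmxV // => /rowP /(_ i); rewrite !mxE eqxx /= => /eqP.
by rewrite oner_eq0.
Qed.

Lemma quad_form (P A : 'M[C]_n) (dd : 'rV[C]_n) (r : 'rV[C]_n) :
  P^t* *m P = 1%:M -> A = P^t* *m diag_mx dd *m P ->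
  (r *m A *m r^t*) 0 0 = \sum_i dd 0 i * `|(r *m P^t*) 0 i|^+2
  /\ (r *m r^t*) 0 0 = \sum_i `|(r *m P^t*) 0 i|^+2.
Proof.
move=> PtP ->.
set w := r *m P^t*.
have wt : P *m r^t* = w^t* by rewrite /w trmx_mul map_mxM trmxCK.
split.
  rewrite -!mulmxA (_ : P *m r^t* = w^t*); last by rewrite /w trmx_mul map_mxM trmxCK.
  rewrite !mulmxA -/w mul_mx_diag mxE.
  apply: eq_bigr => j _; rewrite !mxE normCK; ring.
rewrite -{1}[r]mulmx1 -PtP !mulmxA -/w -mulmxA (_ : P *m r^t* = w^t*); last by rewrite /w trmx_mul map_mxM trmxCK.
rewrite mxE.
apply: eq_bigr => j _; rewrite !mxE normCK //.
Qed.
End Herm.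
Section Aux. Variable R : realType.
Lemma le_bigmaxs (s : seq R) x : x \in s -> x <= \big[Num.max/0]_(y <- s) y.
Proof.
elim: s => // a s IH; rewrite inE big_cons => /orP[/eqP->|xs].
  by rewrite le_max lexx.
by rewrite le_max IH ?orbT.
Qed.
Lemma bigmaxs_ge0 (s : seq R) : 0 <= \big[Num.max/0]_(y <- s) y.
Proof. by elim: s => [|a s IH]; rewrite ?big_nil // big_cons le_max IH orbT. Qed.
Lemma ge_bigmins (s : seq R) x0 x : x \in s -> \big[Num.min/x0]_(y <- s) y <= x.
Proof.
elim: s => // a s IH; rewrite inE big_cons => /orP[/eqP->|xs].
  by rewrite ge_min lexx.
by rewrite ge_min IH ?orbT.
Qed.
End Aux.
Section Rayleigh.
Variable R : realType.
Variable n : nat.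
Local Open Scope sesquilinear_scope.

Definition sqv (v : 'cV[R]_n) := \sum_i (v i 0)^+2.

Lemma eigs_mem (M : 'M[R]_n) (z : R[i]) : root (char_poly (cplx_mx M)) z -> z \in eigs M.
Proof.
rewrite /eigs; case: closed_field_poly_normal => /= rs Hrs.
rewrite {1}Hrs (monicP (char_poly_monic _)) scale1r.
by rewrite root_prod_XsubC.
Qed.

Lemma cplx_mxE (M : 'M[R]_n) : cplx_mx M = map_mx (real_complex R) M.
Proof. by []. Qed.

Lemma ge0_complex (x : R[i]) : 0 <= x -> x = (complex.Re x)%:C /\ 0 <= complex.Re x.
Proof.
case: x => a b; rewrite lecE /= => /andP[/eqP b0 a0]; subst b.
by split.
Qed.

Lemma rayleigh (M : 'M[R]_n) (v : 'cV[R]_n) :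
  sigma_min M ^+ 2 * sqv v <= sqv (M *m v) /\ sqv (M *m v) <= sigma_max M ^+ 2 * sqv v.
Proof.
set S := M^T *m M.
have Sh : cplx_mx S \is hermsymmx.
  rewrite is_hermitianmxE expr0 scale1r; apply/eqP/matrixP => i j.
  rewrite !mxE conj_Creal; last by apply/complex_realP; eexists.
  by rewrite /S; congr (_ +i* _); apply: eq_bigr => l _; rewrite !mxE mulrC.
have [P [dd [PPt PtP Sdec ddr ddroot]]] := herm_decomp Sh.
set vc := map_mx (real_complex R) v.
set r := vc^T.
have [Hq Hn] := quad_form r PtP Sdec.
set w := r *m P^t* in Hq Hn.
have rt : r^t* = vc.
  rewrite /r trmxK; apply/matrixP => i j; rewrite !mxE conj_Creal //.
  by apply/complex_realP; eexists.
rewrite rt in Hq Hn.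
pose c i := complex.Re (dd 0 i).
pose rr i := complex.Re (`|w 0 i| ^+ 2).
have ddE i : dd 0 i = (c i)%:C by rewrite /c RRe_real.
have rrE i : `|w 0 i| ^+ 2 = (rr i)%:C /\ 0 <= rr i.
  by apply: ge0_complex; apply: exprn_ge0.
have e1 : sqv (M *m v) = \sum_i c i * rr i.
  apply: complexI; rewrite [RHS]rmorph_sum.
  have -> : \sum_i (c i * rr i)%:C = (r *m cplx_mx S *m vc) 0 0.
    by rewrite Hq; apply: eq_bigr => i _; rewrite rmorphM /= ddE (proj1 (rrE i)).
  rewrite /r /vc cplx_mxE map_trmx -!map_mxM /= mxE; congr (_%:C).
  rewrite /S /sqv mulmxA -trmx_mul -mulmxA mxE.
  by apply: eq_bigr => i _; rewrite !mxE expr2.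
have e2 : sqv v = \sum_i rr i.
  apply: complexI; rewrite [RHS]rmorph_sum.
  have -> : \sum_i (rr i)%:C = (r *m vc) 0 0.
    by rewrite Hn; apply: eq_bigr => i _; rewrite (proj1 (rrE i)).
  rewrite /r /vc map_trmx -!map_mxM /= mxE; congr (_%:C).
  by rewrite /sqv mxE; apply: eq_bigr => i _; rewrite !mxE expr2.
have cin i : c i \in gram_eigs M.
  by rewrite /gram_eigs; apply: map_f; apply: eigs_mem.
rewrite e1 e2; split.
- rewrite /sigma_min -/(gram_eigs M).
  set m := \big[Num.min/_]_(x <- _) x.
  have mle i : m <= c i by apply: ge_bigmin_seq => //; exact: cin.
  have [m0|m0] := lerP 0 m.
    rewrite sqr_sqrtr // mulr_sumr; apply: ler_sum => i _.
    by apply: ler_wpM2r => //; case: (rrE i).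
  rewrite (eqP (_ : Num.sqrt m == 0)); last by rewrite sqrtr_eq0 ltW.
  rewrite expr0n mul0r.
  by rewrite -e1; apply: sumr_ge0 => i _; apply: sqr_ge0.
- rewrite /sigma_max -/(gram_eigs M).
  set m := \big[Num.max/_]_(x <- _) x.
  have mle i : c i <= m.
    by rewrite /m; apply: le_bigmaxs; exact: cin.
  rewrite sqr_sqrtr ?bigmaxs_ge0 // mulr_sumr; apply: ler_sum => i _.
  by apply: ler_wpM2r => //; case: (rrE i).
Qed.
End Rayleigh.
Section PowSmall.
Variable R : realType.
Local Open Scope sesquilinear_scope.
Local Notation C := (R[i]).
Import ComplexField.Normc.

Lemma normc_ge0 (z : C) : 0 <= normc z.
Proof. by case: z => a b; apply: sqrtr_ge0. Qed.

Lemma normc_real (x : R) : normc (x%:C) = `|x|.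
Proof. by rewrite /= expr0n addr0 sqrtr_sqr. Qed.

Lemma normc_sum (I : Type) (r : seq I) (F : I -> C) :
  normc (\sum_(i <- r) F i) <= \sum_(i <- r) normc (F i).
Proof.
apply: (big_ind2 (fun a b => normc a <= b)).
- by rewrite normc0.
- by move=> x1 x2 y1 y2 h1 h2; apply: le_trans (le_normcD x1 y1) _; apply: lerD.
- by [].
Qed.

Definition RB n (M : 'M[C]_n) (b : R) := forall i, \sum_j normc (M i j) <= b.

Lemma RB_entry n (M : 'M[C]_n) b i j : RB M b -> normc (M i j) <= b.
Proof.
move=> H; apply: le_trans (H i).
by rewrite (bigD1 j) //= lerDl; apply: sumr_ge0 => l _; apply: normc_ge0.
Qed.

Lemma RB_mul n (M N : 'M[C]_n) a b : RB M a -> RB N b -> 0 <= b -> RB (M *m N) (a * b).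
Proof.
move=> HM HN b0 i.
have h1 : \sum_j normc ((M *m N) i j) <= \sum_j \sum_l normc (M i l) * normc (N l j).
  apply: ler_sum => j _; rewrite mxE.
  have := normc_sum (index_enum _) (fun l => M i l * N l j); move/le_trans; apply.
  by apply: ler_sum => l _; rewrite normcM.
apply: le_trans h1 _; rewrite exchange_big /=.
have h2 : \sum_l \sum_j normc (M i l) * normc (N l j) <= \sum_l normc (M i l) * b.
  apply: ler_sum => l _; rewrite -mulr_sumr; apply: ler_wpM2l; first exact: normc_ge0.
  exact: HN.
apply: le_trans h2 _.
by rewrite -mulr_suml; apply: ler_wpM2r.
Qed.

Lemma RB_1 n : RB (1%:M : 'M[C]_n) 1.
Proof.
move=> i; rewrite (bigD1 i) //= mxE eqxx /= expr1n expr0n /= addr0 sqrtr1 big1 ?addr0 //.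
by move=> j /negbTE ji; rewrite mxE eq_sym ji /= expr0n /= addr0 sqrtr0.
Qed.

Lemma RB_pow n (M : 'M[C]_n) a k : 0 <= a -> RB M a -> RB (iter k (mulmx M) 1%:M) (a ^+ k).
Proof.
move=> a0 H; elim: k => [|k IH]; first by rewrite expr0; apply: RB_1.
by rewrite iterS exprS; apply: RB_mul => //; apply: exprn_ge0.
Qed.

Lemma RB_sum n (M : 'M[C]_n) : RB M (\sum_i \sum_j normc (M i j)).
Proof.
move=> i; rewrite [X in _ <= X](bigD1 i) //= lerDl; apply: sumr_ge0 => l _.
by apply: sumr_ge0 => j _; apply: normc_ge0.
Qed.

End PowSmall.
Section PowSmall2.
Variable R : realType.
Local Open Scope sesquilinear_scope.
Local Notation C := (R[i]).
Import ComplexField.Normc.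

Lemma le_bigmaxF (T : eqType) (s : seq T) (F : T -> R) x : x \in s -> F x <= \big[Num.max/0]_(y <- s) F y.
Proof.
elim: s => // a s IH; rewrite inE big_cons => /orP[/eqP->|xs].
  by rewrite le_max lexx.
by rewrite le_max IH ?orbT.
Qed.

Lemma bigmaxF_ge0 (T : eqType) (s : seq T) (F : T -> R) : 0 <= \big[Num.max/0]_(y <- s) F y.
Proof. by elim: s => [|a s IH]; rewrite ?big_nil // big_cons le_max IH orbT. Qed.

Lemma cplx_iter n (P : 'M[R]_n) k :
  cplx_mx (iter k (mulmx P) 1%:M) = iter k (mulmx (cplx_mx P)) 1%:M.
Proof.
rewrite !cplx_mxE; elim: k => [|k IH] /=; first by rewrite map_mx1.
by rewrite map_mxM IH.
Qed.

Lemma pow_small n (P : 'M[R]_n) : spectral_radius P < 1 ->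
  forall eps, 0 < eps -> exists k, forall i j, `|(iter k (mulmx P) 1%:M) i j| <= eps.
Proof.
case: n P => [|n] P hr eps e0; first by exists 0%N => -[].
set rho := spectral_radius P in hr.
have rho0 : 0 <= rho by apply: bigmaxF_ge0.
set A := cplx_mx P.
have [U Uu Ut] := Schur A (ltn0Sn n).
have UUt : U *m U^t* = 1%:M by apply/unitarymxP.
have Uinv := invmx_unitary Uu.
have Uunit := unitarymx_unit Uu.
have UtU : U^t* *m U = 1%:M by rewrite -Uinv mulVmx.
set T := U *m A *m U^t*.
have Ttrig : is_trig_mx T by move: Ut; rewrite /similar_to /conjmx pinvmx_unitary.
have AE : A = U^t* *m T *m U by rewrite /T !mulmxA UtU mul1mx -mulmxA UtU mulmx1.
have Tii : forall i, normc (T i i) <= rho.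
  move=> i.
  have rT : root (char_poly T) (T i i).
    rewrite char_poly_trig // /root horner_prod (bigD1 i) //= hornerXsubC subrr mul0r //.
  move: rT; rewrite -eigenvalue_root_char => /eigenvalueP [v vT v0].
  have rA : root (char_poly A) (T i i).
    rewrite -eigenvalue_root_char; apply/eigenvalueP; exists (v *m U).
      have e : v *m T *m U = v *m U *m A.
        by rewrite /T !mulmxA -(mulmxA _ (U^t*)) UtU mulmx1.
      by rewrite -e vT scalemxAl.
    apply: contra v0 => /eqP vU0; apply/eqP.
    by rewrite -[v]mulmx1 -UUt mulmxA vU0 mul0mx.
  have := eigs_mem rA; rewrite /rho /spectral_radius.
  move=> /(le_bigmaxF (fun z : C => Num.sqrt (complex.Re z ^+ 2 + complex.Im z ^+ 2))).
  by case: (T i i).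
clearbody T.
pose K := \sum_a \sum_b normc (T a b).
have K0 : 0 <= K by apply: sumr_ge0 => a _; apply: sumr_ge0 => b _; apply: normc_ge0.
pose N := n.+1%:R * K.
have N0 : 0 <= N by apply: mulr_ge0.
pose d := (1 - rho) / (2 * (N + 1)).
have hd : d * (2 * (N + 1)) = 1 - rho by rewrite /d divfK // mulf_neq0 // gt_eqF // ltr_wpDl.
have d0 : 0 < d by rewrite /d divr_gt0 ?subr_gt0 // mulr_gt0 // ltr_wpDl.
have Nd0 : 0 <= N * d by apply: mulr_ge0 => //; apply: ltW.
have d1 : d <= 1 by lra.
pose rho1 := (1 + rho) / 2.
have rho10 : 0 <= rho1 by rewrite /rho1; lra.
have rho11 : rho1 < 1 by rewrite /rho1; lra.
pose Dg : 'M[C]_n.+1 := diag_mx (\row_i ((d ^+ i)%:C)).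
pose Di : 'M[C]_n.+1 := diag_mx (\row_i ((d^-1 ^+ i)%:C)).
pose T' : 'M[C]_n.+1 := \matrix_(i, j) (T i j * (d ^+ (i - j))%:C).
have DT : Dg *m T = T' *m Dg.
  apply/matrixP => i j; rewrite mul_diag_mx mul_mx_diag !mxE.
  have [ji|ij] := leqP j i.
    by rewrite -mulrA -rmorphM /= -exprD subnK // mulrC.
  by move/is_trig_mxP: Ttrig => /(_ i j ij) ->; rewrite !mul0r mulr0.
have DiD : Di *m Dg = 1%:M.
  apply/matrixP => i j; rewrite mul_diag_mx !mxE.
  case: eqP => [->|_]; last by rewrite mulr0n mulr0.
  by rewrite mulr1n -rmorphM /= -exprMn mulVf ?gt_eqF // expr1n.
have Tk k : iter k (mulmx T) 1%:M = Di *m iter k (mulmx T') 1%:M *m Dg.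
  have : Dg *m iter k (mulmx T) 1%:M = iter k (mulmx T') 1%:M *m Dg.
    elim: k => [|k IH] /=; first by rewrite mulmx1 mul1mx.
    by rewrite mulmxA DT -mulmxA IH mulmxA.
  by move=> h; rewrite -mulmxA -h mulmxA DiD mul1mx.
have Ak k : iter k (mulmx A) 1%:M = U^t* *m iter k (mulmx T) 1%:M *m U.
  elim: k => [|k IH] /=; first by rewrite mulmx1 UtU.
  by rewrite IH {1}AE !mulmxA -[_ *m U *m U^t*]mulmxA UUt mulmx1.
have RBT' : RB T' rho1.
  move=> i.
  have e j : normc (T' i j) = normc (T i j) * d ^+ (i - j).
    by rewrite mxE normcM normc_real ger0_norm // exprn_ge0 // ltW.
  rewrite (bigD1 i) //= e subnn expr0 mulr1.
  have hrest : \sum_(j | j != i) normc (T' i j) <= N * d.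
    have h1 : \sum_(j | j != i) normc (T' i j) <= \sum_(j | j != i) K * d.
      apply: ler_sum => j ji; rewrite e.
      have [jlti|ilej] := ltnP j i.
        apply: ler_pM; [exact: normc_ge0 | exact: (exprn_ge0 _ (ltW d0)) | exact: (RB_entry i j (RB_sum T)) |].
        have -> : (i - j = (i - j).-1.+1)%N by rewrite prednK // subn_gt0.
        rewrite exprS; apply: ler_piMr; [exact: ltW | apply: exprn_ile1 => //; exact: ltW].
      have ilt : (i < j)%N by rewrite ltn_neqAle eq_sym ji ilej.
      move/is_trig_mxP: Ttrig => /(_ i j ilt) ->.
      rewrite /= expr0n /= addr0 sqrtr0 mul0r; apply: mulr_ge0 => //; exact: ltW.
    apply: le_trans h1 _.
    have h2 : \sum_(j < n.+1) K * d = N * d by rewrite sumr_const card_ord /N -mulrA mulr_natl.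
    rewrite -h2 [X in _ <= X](bigD1 i) //= lerDr; apply: mulr_ge0 => //; exact: ltW.
  have := Tii i; rewrite /rho1; lra.
set X := U^t* *m Di.
set Y := Dg *m U.
pose bX := \sum_a \sum_b normc (X a b).
pose bY := \sum_a \sum_b normc (Y a b).
have bX0 : 0 <= bX by apply: sumr_ge0 => a _; apply: sumr_ge0 => b _; apply: normc_ge0.
have bY0 : 0 <= bY by apply: sumr_ge0 => a _; apply: sumr_ge0 => b _; apply: normc_ge0.
have [k hk] := @geo_small R rho1 (eps / (bX * bY + 1)) rho10 rho11
   (ltac:(by rewrite divr_gt0 // ltr_wpDl // mulr_ge0)).
exists k => i j.
have RBk : RB (X *m iter k (mulmx T') 1%:M *m Y) (bX * rho1 ^+ k * bY).
  apply: RB_mul; last exact: bY0; last exact: RB_sum.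
  apply: RB_mul; [exact: RB_sum | exact: RB_pow | exact: exprn_ge0].
have e1 : iter k (mulmx A) 1%:M = X *m iter k (mulmx T') 1%:M *m Y.
  by rewrite Ak Tk /X /Y !mulmxA.
have := RB_entry i j RBk; rewrite -e1 /A -cplx_iter cplx_mxE mxE normc_real.
move/le_trans; apply.
rewrite mulrAC.
apply: le_trans (ler_wpM2l (mulr_ge0 bX0 bY0) hk) _.
rewrite mulrA ler_pdivrMr ?ltr_wpDl ?mulr_ge0 //.
by rewrite mulrDr mulr1 mulrC lerDl ltW.
Qed.

End PowSmall2.
Section Main.
Variable R : realType.
Variable n : nat.
Implicit Types (A B C F X W Q : 'M[R]_n).

Lemma reduce_A A B C F : A \in unitmx ->
  (exists! W, Gmap (C *m invmx A *m B) (C *m invmx A *m F) W = W) ->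
  exists! X, A *m X + B *m absmx (C *m X) = F.
Proof.
move=> Au [W [HW Wu]].
exists (invmx A *m (F - B *m absmx W)); split.
  have CX : C *m (invmx A *m (F - B *m absmx W)) = W.
    by rewrite -{2}HW /Gmap mulmxA mulmxBr !mulmxA.
  by rewrite CX mulmxA (mulmxV Au) mul1mx subrK.
move=> Y HY.
have CY : Gmap (C *m invmx A *m B) (C *m invmx A *m F) (C *m Y) = C *m Y.
  rewrite /Gmap -HY mulmxDr !mulmxA addrK.
  by rewrite -(mulmxA C) (mulVmx Au) mulmx1.
have := Wu _ CY => WE.
by rewrite WE -HY addrK mulmxA (mulVmx Au) mul1mx.
Qed.

Lemma reduce_C A B C F : C \in unitmx -> A *m invmx C \in unitmx ->
  (exists! W, Gmap (invmx (A *m invmx C) *m B) (invmx (A *m invmx C) *m F) W = W) ->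
  exists! X, A *m X + B *m absmx (C *m X) = F.
Proof.
move=> Cu Mu [W [HW Wu]].
set M := A *m invmx C in Mu HW Wu *.
exists (invmx C *m W); split.
  rewrite [C *m _]mulmxA (mulmxV Cu) mul1mx mulmxA -/M.
  rewrite -{1}HW /Gmap mulmxBr !mulmxA (mulmxV Mu) !mul1mx.
  by rewrite subrK.
move=> Y HY.
have AY : A *m Y = M *m (C *m Y) by rewrite /M -!mulmxA (mulKmx Cu).
have CY : Gmap (invmx M *m B) (invmx M *m F) (C *m Y) = C *m Y.
  rewrite /Gmap -HY AY mulmxDr !mulmxA addrK.
  by rewrite -(mulmxA (invmx M) A) -/M (mulVmx Mu) mul1mx.
have := Wu _ CY => WE.
by rewrite WE mulmxA (mulVmx Cu) mul1mx.
Qed.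

End Main.
Section Main2.
Variable R : realType.
Variable n : nat.
Implicit Types (A B C F X W Q : 'M[R]_n).

Lemma sqv_pos (v : 'cV[R]_n) : v != 0 -> 0 < sqv v.
Proof.
move=> v0.
have [i vi] : exists i, v i 0 != 0.
  apply/existsP; apply: contraR v0 => /existsPn H; apply/eqP/matrixP => i j.
  by rewrite ord1 mxE; move: (H i) => /negPn /eqP.
apply: lt_le_trans (_ : (v i 0)^+2 <= _).
  by rewrite lt0r sqr_ge0 sqrf_eq0 vi.
by rewrite /sqv (bigD1 i) //= lerDl; apply: sumr_ge0 => l _; apply: sqr_ge0.
Qed.

Lemma sqv_abs (v : 'cV[R]_n) : sqv (absmx v) = sqv v.
Proof. by apply: eq_bigr => i _; rewrite mxE real_normK // num_real. Qed.

Lemma sqv_absmx (B : 'M[R]_n) (v : 'cV[R]_n) : sqv (B *m v) <= sqv (absmx B *m absmx v).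
Proof.
apply: ler_sum => i _.
rewrite -real_normK ?num_real //; apply: lerXn2r.
- by rewrite nnegrE normr_ge0.
- by rewrite nnegrE mxE; apply: sumr_ge0 => l _; rewrite !mxE mulr_ge0.
have := absmx_mul B v i 0; by rewrite mxE.
Qed.

Lemma case_C A B C F b : C \in unitmx -> 0 <= b -> b < sigma_min (A *m invmx C) ->
  (forall v : 'cV[R]_n, sqv (B *m v) <= b ^+ 2 * sqv v) ->
  exists! X, A *m X + B *m absmx (C *m X) = F.
Proof.
move=> Cu b0 bs HB.
set M := A *m invmx C in bs *.
set s := sigma_min M in bs.
have s0 : 0 < s by apply: le_lt_trans bs.
have Mu : M \in unitmx.
  rewrite unitmxE unitfE -det_tr; apply/negP => /det0P [v v0 vM].
  have Mv : M *m v^T = 0 by rewrite -[M]trmxK -trmx_mul vM trmx0.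
  have [h _] := rayleigh M v^T.
  rewrite Mv in h.
  have : sqv (0 : 'cV[R]_n) = 0 by rewrite /sqv big1 // => i _; rewrite mxE expr0n.
  move=> z; rewrite z in h.
  have up : 0 < sqv v^T by apply: sqv_pos; rewrite trmx_eq0.
  have : 0 < s ^+ 2 * sqv v^T by rewrite mulr_gt0 // exprn_gt0.
  by rewrite ltNge h.
apply: reduce_C => //.
apply: (@core_euc R n _ _ (b ^+ 2 / s ^+ 2)).
- by rewrite divr_ge0 // sqr_ge0.
- by rewrite ltr_pdivrMr ?exprn_gt0 // mul1r; rewrite ltr_pXn2r ?nnegrE // ltW.
move=> v.
set u := invmx M *m B *m v.
have Mu_eq : M *m u = B *m v by rewrite /u !mulmxA (mulmxV Mu) mul1mx.
have [h _] := rayleigh M u.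
rewrite -/s Mu_eq in h.
have h2 := le_trans h (HB v).
rewrite -/(sqv u) mulrAC ler_pdivlMr ?exprn_gt0 // mulrC.
exact: h2.
Qed.

End Main2.

Local Close Scope complex_scope.

Theorem theorem4p2 (R : realType) (n : nat) (A B C F : 'M[R]_n) :
  [\/ (C \in unitmx) /\ sigma_max (absmx B) < sigma_min (A *m invmx C),
      (C \in unitmx) /\ sigma_max B < sigma_min (A *m invmx C),
      (A \in unitmx) /\ spectral_radius (absmx (C *m invmx A) *m absmx B) < 1
    | (A \in unitmx) /\ sigma_max (C *m invmx A *m B) < 1] ->
  exists! X : 'M[R]_n, A *m X + B *m absmx (C *m X) = F.
Proof.
case=> [[Cu hs]|[Cu hs]|[Au hr]|[Au hs]].
- apply: (@case_C R n A B C F (sigma_max (absmx B))) => //.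
    exact: sqrtr_ge0.
  move=> v; apply: le_trans (sqv_absmx B v) _; rewrite -(sqv_abs v).
  exact: (proj2 (rayleigh (absmx B) (absmx v))).
- apply: (@case_C R n A B C F (sigma_max B)) => //.
    exact: sqrtr_ge0.
  by move=> v; exact: (proj2 (rayleigh B v)).
- apply: reduce_A => //.
  have [k hk] := pow_small hr (ltac:(by rewrite invr_gt0 ltr_wpDl ?mulr_ge0) : 0 < (2 * n%:R + 2 : R)^-1).
  apply: (@core_abs R n _ _ _ k (absmx_mul (C *m invmx A) B)).
  by move=> i j; apply: le_trans (ler_norm _) (hk i j).
- apply: reduce_A => //.
  apply: (@core_euc R n _ _ (sigma_max (C *m invmx A *m B) ^+ 2)).
  + exact: sqr_ge0.
  + have s0 : 0 <= sigma_max (C *m invmx A *m B) by exact: sqrtr_ge0.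
    by rewrite expr2; nra.
  + by move=> v; exact: (proj2 (rayleigh _ v)).
Qed.
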